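(* Let $\operatorname{Erf}(\xi)=\int_0^\xi e^{-x^2}\,dx$ and $n,m\in\mathbb{N}_0$. There are polynomials $p^*_{n,m},q^*_{n,m}\in\mathbb{Q}[x,y]$ with \[ \iint x^ny^m(x-y)e^{-(x-y)^2}\,dx\,dy=p^*_{n,m}(x,y)e^{-(x-y)^2}+q^*_{n,m}(x,y)\operatorname{Erf}(x-y) \] (i.e. $\partial_x\partial_y$ of the right-hand side equals $x^ny^m(x-y)e^{-(x-y)^2}$), such that $p^*_{n,m}$ has degree $n+m-1$ and $q^*_{n,m}$ has degree $n+m$.
   Context: A polynomial of negative degree means the zero polynomial. *)

(* Defs.v *)
From Stdlib Require Import Reals.
From Coquelicot Require Import Coquelicot.
From mathcomp Require Import all_boot all_algebra.
From mathcomp Require Import Rstruct.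
From mathcomp Require Import mpoly.

Set Implicit Arguments.
Unset Strict Implicit.
Unset Printing Implicit Defensive.

Definition Erf (xi : R) : R := RInt (fun s => exp (- (s ^ 2))%R) 0%R xi.

Definition ev2 (p : {mpoly rat[2]}) (x y : R) : R :=
  mmap (fun c : rat => (ratr c : R))
       (fun i : 'I_2 => if nat_of_ord i == 0%N then x else y) p.

(* total degree of p is d; msize p = 1 + deg p, msize 0 = 0, so a
   negative degree (d = -1) means p = 0 *)
Definition has_total_degree (p : {mpoly rat[2]}) (d : int) : Prop :=
  (Posz (msize p) = d + 1)%R.

Definition mixed_partial_eq (F G : R -> R -> R) : Prop :=
  (forall x y, ex_derive (fun y' => F x y') y) /\
  (forall x y, is_derive (fun x' => Derive (fun y' => F x' y') y) x (G x y)).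

(* Main.v *)
Require Import Defs.
From Stdlib Require Import Reals.
From Coquelicot Require Import Coquelicot.
From mathcomp Require Import all_boot all_algebra.
From mathcomp Require Import Rstruct.
From mathcomp Require Import mpoly.
From mathcomp Require Import ring zify.
Import GRing.Theory Num.Theory.

Local Open Scope ring_scope.
Definition i0 : 'I_2 := ord0.
Definition i1 : 'I_2 := ord_max.
Notation MP := {mpoly rat[2]}.
Definition X : MP := 'X_i0.
Definition Y : MP := 'X_i1.
Definition uu : MP := 'X_i0 - 'X_i1.
Definition mo (i j : nat) : MP := X ^+ i * Y ^+ j.
Definition hh : MP := (1 / 2 : rat)%:MP.
Definition mn (i j : nat) : 'X_{1..2} := (U_(i0) *+ i + U_(i1) *+ j)%MM.

Lemma h2 : 2%:R * hh = 1.
Proof. by rewrite /hh -mpolyC_nat -rmorphM /= mulrC divfK // -mpolyC1. Qed.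

Lemma hh_trick (L R K : MP) : L - R = (2%:R * hh - 1) * K -> L = R.
Proof. by rewrite h2 subrr mul0r => /eqP; rewrite subr_eq0 => /eqP. Qed.

Lemma mnE i j : 'X_[mn i j] = mo i j :> MP.
Proof. by rewrite /mn mpolyXD -!mpolyXn. Qed.

Lemma mn0 i j : mn i j i0 = i.
Proof. by rewrite /mn mnmDE !mulmnE !mnm1E /= mul1n mul0n addn0. Qed.
Lemma mn1 i j : mn i j i1 = j.
Proof. by rewrite /mn mnmDE !mulmnE !mnm1E /= mul1n mul0n. Qed.
Lemma mdeg_mn i j : mdeg (mn i j) = (i + j)%N.
Proof. by rewrite /mn mdegD !mdegMn !mdeg1 !mul1n. Qed.
Lemma mn_eq i j i' j' : (mn i j == mn i' j') = (i == i') && (j == j').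
Proof.
case: (eqVneq (mn i j) (mn i' j')) => [E|NE].
  have := congr1 (fun m : 'X_{1..2} => m i0) E; have := congr1 (fun m : 'X_{1..2} => m i1) E.
  by rewrite /= !mn0 !mn1 => -> ->; rewrite !eqxx.
apply/esym/negbTE; apply: contra NE => /andP[/eqP-> /eqP->]; exact: eqxx.
Qed.

Lemma coef_big (p : MP) m : (msize p <= mdeg m)%N -> p@_m = 0.
Proof. by move=> H; apply: memN_msupp_eq0; exact: msize_mdeg_ge. Qed.

Lemma msize_leP (p : MP) k : (forall m, (k <= mdeg m)%N -> p@_m = 0) -> (msize p <= k)%N.
Proof.
move=> H; rewrite msizeE; apply/bigmax_leqP_seq => m Hm _.
rewrite ltnNge; apply/negP => /H E.
by move: Hm; rewrite mcoeff_msupp E eqxx.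
Qed.

Lemma msizeM2 (p q : MP) : (msize (p * q) <= (msize p + msize q).-1)%N.
Proof.
apply: msize_leP => m Hm; rewrite mcoeffM big1 // => k /eqP Ek.
have Hd := congr1 mdeg Ek; rewrite mdegD in Hd.
case: (leqP (msize p) (mdeg k.1)) => H1; first by rewrite coef_big // mul0r.
rewrite [q@__]coef_big ?mulr0 //.
have : ((msize p + msize q).-1 <= mdeg k.1 + mdeg k.2)%N by rewrite -Hd.
move: H1; move: (mdeg k.1) (mdeg k.2) (msize p) (msize q) => a b c d; lia.
Qed.

Lemma msize_der i (p : MP) : (msize p^`M(i) <= msize p)%N.
Proof.
apply: msize_leP => m Hm; rewrite mcoeff_mderiv coef_big ?mul0rn //.
rewrite mdegD mdeg1; lia.
Qed.

Lemma msizeD2 (p q : MP) k : (msize p <= k)%N -> (msize q <= k)%N -> (msize (p + q) <= k)%N.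
Proof. move=> H1 H2; apply: leq_trans (msizeD_le p q) _; rewrite geq_max H1 H2 //. Qed.

Lemma msizeN2 (p : MP) k : (msize p <= k)%N -> (msize (- p) <= k)%N.
Proof. by rewrite msizeN. Qed.

Lemma msizeB2 (p q : MP) k : (msize p <= k)%N -> (msize q <= k)%N -> (msize (p - q) <= k)%N.
Proof. by move=> H1 H2; apply: msizeD2 => //; rewrite msizeN. Qed.

Lemma msizeCM (c p : MP) k : (msize c <= 1)%N -> (msize p <= k)%N -> (msize (c * p) <= k)%N.
Proof. move=> H1 H2; apply: leq_trans (msizeM2 c p) _; lia. Qed.

Lemma msize_mo i j : msize (mo i j) = (i + j).+1.
Proof. by rewrite -mnE msizeX mdeg_mn. Qed.

Lemma msizeC1 (c : rat) : (msize (c%:MP : MP) <= 1)%N.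
Proof. by rewrite msizeC; case: (c != 0). Qed.

Lemma msize_hh : (msize hh <= 1)%N.
Proof. exact: msizeC1. Qed.

Lemma msize_nat k : (msize (k%:R : MP) <= 1)%N.
Proof. by rewrite -mpolyC_nat msizeC1. Qed.

Lemma msize_uu : (msize uu <= 2)%N.
Proof.
apply: msizeB2.
- by rewrite /X msizeX mdeg1.
- by rewrite msizeX mdeg1.
Qed.

Lemma subUU (i : 'I_2) : (U_(i) - U_(i))%MM = 0%MM.
Proof. by apply/mnmP => k; rewrite mnmBE subnn mnm0E. Qed.

Lemma dXX : X^`M(i0) = 1.
Proof. by rewrite /X mderivX mnm1E eqxx subUU mpolyX0 scale1r. Qed.
Lemma dYX : Y^`M(i0) = 0.
Proof. by rewrite /Y mderivX mnm1E /= scale0r. Qed.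
Lemma dXY : X^`M(i1) = 0.
Proof. by rewrite /X mderivX mnm1E /= scale0r. Qed.
Lemma dYY : Y^`M(i1) = 1.
Proof. by rewrite /Y mderivX mnm1E eqxx subUU mpolyX0 scale1r. Qed.
Lemma duX : uu^`M(i0) = 1.
Proof. by rewrite /uu mderivB -/X -/Y dXX dYX subr0. Qed.
Lemma duY : uu^`M(i1) = -1.
Proof. by rewrite /uu mderivB -/X -/Y dXY dYY sub0r. Qed.

Lemma dC (c : rat) i (p : MP) : (c%:MP * p)^`M(i) = c%:MP * p^`M(i).
Proof. exact: mderiv_mulC. Qed.
Lemma dhh i (p : MP) : (hh * p)^`M(i) = hh * p^`M(i).
Proof. exact: mderiv_mulC. Qed.
Lemma dnat i k (p : MP) : (k%:R * p)^`M(i) = k%:R * p^`M(i).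
Proof. by rewrite -mpolyC_nat mderiv_mulC. Qed.

Lemma mo_dX i j : (mo i.+1 j)^`M(i0) = i.+1%:R * mo i j.
Proof.
rewrite -!mnE mderivX mn0 -mul_mpolyC mpolyC_nat; congr (_ * 'X_[_]).
apply/mnmP => k; rewrite mnmBE /mn !mnmDE !mulmnE !mnm1E.
by case: k => [[|[|]]] //= _; rewrite ?mul1n ?mul0n ?addn0 ?subn1 ?subn0.
Qed.
Lemma mo_dX0 j : (mo 0 j)^`M(i0) = 0.
Proof. by rewrite -!mnE mderivX mn0 scale0r. Qed.
Lemma mo_dY i j : (mo i j.+1)^`M(i1) = j.+1%:R * mo i j.
Proof.
rewrite -!mnE mderivX mn1 -mul_mpolyC mpolyC_nat; congr (_ * 'X_[_]).
apply/mnmP => k; rewrite mnmBE /mn !mnmDE !mulmnE !mnm1E.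
by case: k => [[|[|]]] //= _; rewrite ?mul1n ?mul0n ?addn0 ?subn1 ?subn0.
Qed.
Lemma mo_dY0 i : (mo i 0)^`M(i1) = 0.
Proof. by rewrite -!mnE mderivX mn1 scale0r. Qed.

Lemma moSX i j : mo i.+1 j = X * mo i j.
Proof. by rewrite /mo exprS mulrA. Qed.
Lemma moSY i j : mo i j.+1 = Y * mo i j.
Proof. by rewrite /mo exprS mulrCA. Qed.

Lemma Cinv k : ((1 / k.+1%:R : rat)%:MP : MP) * k.+1%:R = 1.
Proof. by rewrite -mpolyC_nat -rmorphM /= mul1r mulVf // pnatr_eq0. Qed.

Definition LxM (i j : nat) := exists a S : MP, S^`M(i0) = 0 /\
  a^`M(i0) - 2%:R * uu * a + S^`M(i1) = mo i j /\
  (msize a <= i + j)%N /\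
  (msize (S - (1 / (i + j).+1%:R : rat)%:MP * mo 0 (i + j).+1) <= i + j)%N.

Lemma LxM0 j : LxM 0 j.
Proof.
exists 0, ((1 / j.+1%:R : rat)%:MP * mo 0 j.+1); split; first by rewrite dC mo_dX0 mulr0.
split; first by rewrite mderiv0 mulr0 subr0 add0r dC mo_dY mulrA Cinv mul1r.
by rewrite msize0 add0n subrr msize0.
Qed.

Lemma msize_lead k : (msize ((1 / k.+1%:R : rat)%:MP * mo 0 k.+1) <= k.+2)%N.
Proof. by apply: msizeCM; [exact: msizeC1 | rewrite msize_mo]. Qed.

Lemma LxM1 j : LxM 0 j.+1 -> LxM 1 j.
Proof.
case=> a [S [HS [He [Ha HS2]]]].
exists (- (hh * mo 0 j) + a), S; split => //; split.
  rewrite mderivD mderivN dhh mo_dX0 mulr0 oppr0 add0r.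
  have -> : a^`M(i0) = mo 0 j.+1 + 2%:R * uu * a - S^`M(i1) by rewrite -He; ring.
  apply: (hh_trick _ _ (uu * mo 0 j)).
  rewrite moSX moSY /uu -/X -/Y; ring.
split.
  apply: msizeD2; first by apply: msizeN2; apply: msizeCM; [exact: msize_hh|rewrite msize_mo].
  by move: Ha; rewrite add0n.
by move: HS2; rewrite add0n add1n.
Qed.

Lemma LxMS i j : LxM i.+1 j.+1 -> LxM i j -> LxM i.+2 j.
Proof.
case=> a1 [S1 [HS1 [He1 [Ha1 HT1]]]].
case=> a2 [S2 [HS2 [He2 [Ha2 HT2]]]].
exists (- (hh * mo i.+1 j) + a1 + hh * i.+1%:R * a2), (S1 + hh * i.+1%:R * S2); split.
  by rewrite mderivD -mulrA dhh dnat HS2 HS1 !mulr0 addr0.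
split.
  rewrite !mderivD mderivN dhh mo_dX -[hh * i.+1%:R * a2]mulrA -[hh * i.+1%:R * S2]mulrA !dhh !dnat.
  have -> : a1^`M(i0) = mo i.+1 j.+1 + 2%:R * uu * a1 - S1^`M(i1) by rewrite -He1; ring.
  have -> : a2^`M(i0) = mo i j + 2%:R * uu * a2 - S2^`M(i1) by rewrite -He2; ring.
  apply: (hh_trick _ _ (uu * mo i.+1 j)).
  rewrite !moSX !moSY /uu -/X -/Y; ring.
split.
  apply: msizeD2; first apply: msizeD2.
  - by apply: msizeN2; apply: msizeCM; [exact: msize_hh|rewrite msize_mo].
  - by apply: leq_trans Ha1 _; lia.
  - apply: msizeCM; last by apply: leq_trans Ha2 _; lia.
    by apply: leq_trans (msizeM2 _ _) _; move: msize_hh (msize_nat i.+1); lia.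
have -> : S1 + hh * i.+1%:R * S2 - (1 / (i.+2 + j).+1%:R : rat)%:MP * mo 0 (i.+2 + j).+1
   = (S1 - (1 / (i.+1 + j.+1).+1%:R : rat)%:MP * mo 0 (i.+1 + j.+1).+1) + hh * i.+1%:R * S2.
  by rewrite addSnnS; ring.
have E : (i.+1 + j.+1 = i.+2 + j)%N by lia.
apply: msizeD2; first by move: HT1; rewrite E.
apply: msizeCM.
  by apply: leq_trans (msizeM2 _ _) _; move: msize_hh (msize_nat i.+1); lia.
have -> : S2 = (S2 - (1 / (i + j).+1%:R : rat)%:MP * mo 0 (i + j).+1)
               + (1 / (i + j).+1%:R : rat)%:MP * mo 0 (i + j).+1 by ring.
apply: msizeD2; first by apply: leq_trans HT2 _; lia.
by apply: leq_trans (msize_lead _) _; lia.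
Qed.

Lemma LxM_all : forall i j, LxM i j.
Proof.
suff H : forall i, (forall j, LxM i j) /\ (forall j, LxM i.+1 j) by move=> i; case: (H i).
elim=> [|k [IH1 IH2]]; first by split => j0; [exact: LxM0 | apply: LxM1; exact: LxM0].
by split => // j0; apply: LxMS.
Qed.

Definition LyM (i j : nat) := exists P r : MP, r^`M(i1) = 0 /\
  P^`M(i1) + 2%:R * uu * P = mo i j + r /\
  (msize P <= i + j)%N /\
  (msize (r + mo (i + j) 0) <= i + j)%N.

Lemma LyM0 i : LyM i 0.
Proof.
exists 0, (- mo i 0); split; first by rewrite mderivN mo_dY0 oppr0.
split; first by rewrite mderiv0 mulr0 addr0 subrr.
by rewrite msize0 addn0 addNr msize0.
Qed.

Lemma LyM1 i : LyM i.+1 0 -> LyM i 1.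
Proof.
case=> P [r [Hr [He [HP Hr2]]]].
exists (- (hh * mo i 0) + P), r; split => //; split.
  rewrite mderivD mderivN dhh mo_dY0 mulr0 oppr0 add0r.
  have -> : P^`M(i1) = mo i.+1 0 + r - 2%:R * uu * P by rewrite -He; ring.
  apply: (hh_trick _ _ (- (uu * mo i 0))).
  rewrite !moSX !moSY /uu -/X -/Y; ring.
split.
  apply: msizeD2; first by apply: msizeN2; apply: msizeCM; [exact: msize_hh|rewrite msize_mo addn0 addn1].
  by move: HP; rewrite addn0 addn1.
by move: Hr2; rewrite addn0 addn1.
Qed.

Lemma LyMS i j : LyM i.+1 j.+1 -> LyM i j -> LyM i j.+2.
Proof.
case=> P1 [r1 [Hr1 [He1 [HP1 HT1]]]].
case=> P2 [r2 [Hr2 [He2 [HP2 HT2]]]].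
exists (- (hh * mo i j.+1) + P1 + hh * j.+1%:R * P2), (r1 + hh * j.+1%:R * r2); split.
  by rewrite mderivD -mulrA dhh dnat Hr2 Hr1 !mulr0 addr0.
split.
  rewrite !mderivD mderivN dhh mo_dY -[hh * j.+1%:R * P2]mulrA !dhh !dnat.
  have -> : P1^`M(i1) = mo i.+1 j.+1 + r1 - 2%:R * uu * P1 by rewrite -He1; ring.
  have -> : P2^`M(i1) = mo i j + r2 - 2%:R * uu * P2 by rewrite -He2; ring.
  apply: (hh_trick _ _ (- (uu * mo i j.+1))).
  rewrite !moSX !moSY /uu -/X -/Y; ring.
have E : (i.+1 + j.+1 = i + j.+2)%N by lia.
split.
  apply: msizeD2; first apply: msizeD2.
  - by apply: msizeN2; apply: msizeCM; [exact: msize_hh|rewrite msize_mo; lia].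
  - by rewrite -E.
  - apply: msizeCM; last by apply: leq_trans HP2 _; lia.
    by apply: leq_trans (msizeM2 _ _) _; move: msize_hh (msize_nat j.+1); lia.
have -> : r1 + hh * j.+1%:R * r2 + mo (i + j.+2) 0
   = (r1 + mo (i.+1 + j.+1) 0) + hh * j.+1%:R * r2 by rewrite E; ring.
apply: msizeD2; first by rewrite -E.
apply: msizeCM.
  by apply: leq_trans (msizeM2 _ _) _; move: msize_hh (msize_nat j.+1); lia.
have -> : r2 = (r2 + mo (i + j) 0) - mo (i + j) 0 by ring.
apply: msizeB2; first by apply: leq_trans HT2 _; lia.
by rewrite msize_mo; lia.
Qed.

Lemma LyM_all : forall i j, LyM i j.
Proof.
suff H : forall j, (forall i, LyM i j) /\ (forall i, LyM i j.+1) by move=> i j; case: (H j).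
elim=> [|k [IH1 IH2]]; first by split => i0'; [exact: LyM0 | apply: LyM1; exact: LyM0].
by split => // i0'; apply: LyMS.
Qed.

Lemma mn_of (m : 'X_{1..2}) : m = mn (m i0) (m i1).
Proof.
apply/mnmP => k; rewrite /mn mnmDE !mulmnE !mnm1E.
case: k => [[|[|]]] //= H; rewrite ?mul1n ?mul0n ?addn0 //.
- by congr (m _); apply/val_inj.
- by congr (m _); apply/val_inj.
Qed.

Lemma LyW k (c : MP) : (msize c <= k)%N -> exists P r : MP, r^`M(i1) = 0 /\
  P^`M(i1) + 2%:R * uu * P = c + r /\ (msize P <= k.-1)%N /\ (msize r <= k)%N.
Proof.
elim/mpolyind: c => [|a m p Hm Ha IH] Hc.
  exists 0, 0; rewrite mderiv0 mulr0 !addr0 msize0; split=> //.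
have Hcm : (mdeg m < k)%N.
  apply: leq_trans Hc; apply: msize_mdeg_lt; rewrite mcoeff_msupp mcoeffD mcoeffZ mcoeffX eqxx mulr1.
  by rewrite (memN_msupp_eq0 Hm) addr0.
have Hp : (msize p <= k)%N.
  have -> : p = a *: 'X_[m] + p - a *: 'X_[m] by ring.
  apply: msizeB2 => //; apply: leq_trans (msizeZ_le _ _) _; by rewrite msizeX.
case: (IH Hp) => P2 [r2 [Hr2 [He2 [HP2 Hr2']]]].
have Emn := mn_of m; have Ed : mdeg m = (m i0 + m i1)%N by rewrite {1}Emn mdeg_mn.
case: (LyM_all (m i0) (m i1)) => P1 [r1 [Hr1 [He1 [HP1 Hr1']]]].
exists (a%:MP * P1 + P2), (a%:MP * r1 + r2); split.
  by rewrite mderivD dC Hr1 Hr2 mulr0 addr0.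
split.
  rewrite mderivD dC.
  have -> : P1^`M(i1) = mo (m i0) (m i1) + r1 - 2%:R * uu * P1 by rewrite -He1; ring.
  have -> : P2^`M(i1) = p + r2 - 2%:R * uu * P2 by rewrite -He2; ring.
  have EX : 'X_[m] = mo (m i0) (m i1) :> MP by rewrite -mnE -Emn.
  by rewrite -mul_mpolyC EX; ring.
split.
  apply: msizeD2; last by apply: leq_trans HP2 _; lia.
  by apply: msizeCM; [exact: msizeC1|apply: leq_trans HP1 _; lia].
apply: msizeD2 => //; apply: msizeCM; first exact: msizeC1.
have -> : r1 = (r1 + mo (m i0 + m i1) 0) - mo (m i0 + m i1) 0 by ring.
by apply: msizeB2; [apply: leq_trans Hr1' _ | rewrite msize_mo]; lia.
Qed.

Lemma ry0 (r : MP) N : r^`M(i1) = 0 -> (0 < N)%N -> r@_(mn 0 N) = 0.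
Proof.
case: N => // N Hr _.
have := congr1 (mcoeff (mn 0 N)) Hr; rewrite mcoeff_mderiv mcoeff0 mn1.
have -> : (mn 0 N + U_(i1))%MM = mn 0 N.+1.
  apply/mnmP => k; rewrite mnmDE /mn !mnmDE !mulmnE !mnm1E.
  by case: k => [[|[|]]] //= _; rewrite ?mul1n ?mul0n ?addn0 ?addn1.
by move/eqP; rewrite mulrn_eq0 /= => /eqP.
Qed.

Lemma msize_Ly (P : MP) : (msize (P^`M(i1) + 2%:R * uu * P) <= (msize P).+1)%N.
Proof.
apply: msizeD2; first by apply: leq_trans (msize_der _ _) _.
apply: leq_trans (msizeM2 _ _) _.
have : (msize (2%:R * uu : MP) <= 2)%N.
  by apply: msizeCM; [exact: msize_nat|exact: msize_uu].
lia.
Qed.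

Lemma coef_mo i j i' j' : (mo i j)@_(mn i' j') = ((i == i') && (j == j'))%:R.
Proof. by rewrite -mnE mcoeffX mn_eq. Qed.

Lemma hhC : hh = (1 / 2 : rat)%:MP. Proof. by []. Qed.

Definition alg_goal n m := exists P Q : MP,
  Q^`M(i1)^`M(i0) = 0 /\
  (let A := P^`M(i1) + 2%:R * uu * P - Q in A^`M(i0) - 2%:R * uu * A + Q^`M(i1) = mo n m * uu) /\
  msize P = (n + m)%N /\ msize Q = (n + m).+1.

Lemma alg0 m : alg_goal 0 m.
Proof.
case: (LyM_all 0 m) => P' [r' [Hr [He [HP Hr2]]]].
rewrite add0n in HP Hr2.
exists (- (hh * P')), (- (hh * r')).
have EQy : (- (hh * r'))^`M(i1) = 0 by rewrite mderivN dhh Hr mulr0 oppr0.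
have EA : (- (hh * P'))^`M(i1) + 2%:R * uu * (- (hh * P')) = - (hh * (mo 0 m + r')).
  by rewrite mderivN dhh -He; ring.
split; first by rewrite EQy mderiv0.
split.
  rewrite /= EA EQy.
  have -> : - (hh * (mo 0 m + r')) - - (hh * r') = - (hh * mo 0 m) by ring.
  rewrite mderivN dhh mo_dX0.
  apply: (hh_trick _ _ (uu * mo 0 m)); ring.
rewrite add0n; split.
  apply/eqP; rewrite eqn_leq; apply/andP; split.
    by apply: msizeN2; apply: msizeCM => //; exact: msize_hh.
  case: m He HP Hr2 EA Hr => // m He HP Hr2 EA Hr.
  rewrite ltnNge; apply/negP => Hle.
  rewrite -ltnS in Hle; have Hs := leq_trans (msize_Ly (- (hh * P'))) Hle; rewrite EA in Hs.
  have := @coef_big _ (mn 0 m.+1); rewrite mdeg_mn add0n => /(_ _ Hs).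
  rewrite mcoeffN hhC mcoeffCM mcoeffD coef_mo (@ry0 _ _ Hr) // !eqxx addr0 /=.
  by move/eqP; rewrite oppr_eq0 mulr1.
apply/eqP; rewrite eqn_leq; apply/andP; split.
  apply: msizeN2; apply: msizeCM; first exact: msize_hh.
  have -> : r' = (r' + mo m 0) - mo m 0 by ring.
  by apply: msizeB2; [apply: leq_trans Hr2 _ | rewrite msize_mo addn0].
suff H : mn m 0 \in msupp (- (hh * r')) by have := msize_mdeg_lt H; rewrite mdeg_mn addn0.
rewrite mcoeff_msupp mcoeffN hhC mcoeffCM.
have -> : r' = (r' + mo m 0) - mo m 0 by ring.
rewrite mcoeffB coef_big; last by rewrite mdeg_mn addn0.
by rewrite coef_mo !eqxx.
Qed.

Lemma algS n m : alg_goal n.+1 m.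
Proof.
case: (LxM_all n m) => a1 [S1 [HS1 [He1 [Ha1 HT1]]]].
set N := (n + m)%N in Ha1 HT1.
set lc := (1 / N.+1%:R : rat).
set c1 : MP := (1 / 2 * n.+1%:R : rat)%:MP.
have Ec1 : c1 = hh * n.+1%:R by rewrite /c1 /hh rmorphM /= mpolyC_nat.
set a := - (hh * mo n.+1 m) + c1 * a1.
set B := c1 * S1.
have Claim1 : a^`M(i0) - 2%:R * uu * a + B^`M(i1) = mo n.+1 m * uu.
  rewrite /a /B !mderivD mderivN dhh mo_dX !dC.
  have -> : a1^`M(i0) = mo n m + 2%:R * uu * a1 - S1^`M(i1) by rewrite -He1; ring.
  rewrite Ec1; apply: (hh_trick _ _ (uu * mo n.+1 m)).
  rewrite !moSX /uu -/X -/Y; ring.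
have HS1s : (msize S1 <= N.+2)%N.
  have -> : S1 = (S1 - lc%:MP * mo 0 N.+1) + lc%:MP * mo 0 N.+1 by ring.
  by apply: msizeD2; [apply: leq_trans HT1 _; lia | exact: msize_lead].
have Hc : (msize (a + B) <= N.+2)%N.
  apply: msizeD2; last by apply: msizeCM => //; exact: msizeC1.
  apply: msizeD2.
    by apply: msizeN2; apply: msizeCM; [exact: msize_hh|rewrite msize_mo /N; lia].
  by apply: msizeCM; [exact: msizeC1|apply: leq_trans Ha1 _; lia].
case: (LyW _ _ Hc) => P [r [Hr [He [HP Hr']]]].
exists P, (B + r).
have EN : (n.+1 + m)%N = N.+1 by rewrite addSn.
rewrite EN.
split; first by rewrite mderivD Hr addr0 /B dC dC mderiv_comm HS1 mderiv0 mulr0.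
split.
  rewrite /= He [(B + r)^`M(i1)]mderivD Hr addr0 -Claim1.
  by have -> : a + B + r - (B + r) = a by ring.
have Hkey : (B + r)@_(mn 0 N.+1) = (1 / 2 * n.+1%:R) * lc.
  rewrite mcoeffD (@ry0 _ _ Hr) // addr0 /B mcoeffCM.
  have -> : S1 = (S1 - lc%:MP * mo 0 N.+1) + lc%:MP * mo 0 N.+1 by ring.
  rewrite mcoeffD coef_big; last by rewrite mdeg_mn add0n; apply: leq_trans HT1 _; lia.
  by rewrite mcoeffCM coef_mo !eqxx /=; ring.
have Hnz : (1 / 2 * n.+1%:R) * lc != 0.
  by rewrite /lc !mulf_neq0 // ?invr_eq0 ?pnatr_eq0.
have Hkey2 : (a + B + r)@_(mn 0 N.+1) = (1 / 2 * n.+1%:R) * lc.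
  rewrite -addrA mcoeffD Hkey /a mcoeffD mcoeffN hhC mcoeffCM coef_mo /=.
  rewrite mcoeffCM coef_big ?mdeg_mn //; first by rewrite mulr0 mulr0 oppr0 !add0r.
  by apply: leq_trans Ha1 _; lia.
split.
  apply/eqP; rewrite eqn_leq HP /=.
  rewrite ltnNge; apply/negP => Hle.
  rewrite -ltnS in Hle; have Hs := leq_trans (msize_Ly P) Hle; rewrite He in Hs.
  have := @coef_big _ (mn 0 N.+1); rewrite mdeg_mn add0n => /(_ _ Hs).
  by rewrite Hkey2 => /eqP; rewrite (negbTE Hnz).
apply/eqP; rewrite eqn_leq; apply/andP; split.
  by apply: msizeD2 => //; apply: msizeCM => //; exact: msizeC1.
suff H : mn 0 N.+1 \in msupp (B + r) by have := msize_mdeg_lt H; rewrite mdeg_mn add0n.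
by rewrite mcoeff_msupp Hkey.
Qed.

Definition hxy (x y : R) := fun i : 'I_2 => if nat_of_ord i == 0%N then x else y.
Lemma ev2E p x y : ev2 p x y = mmap (ratr : rat -> R) (hxy x y) p.
Proof. by []. Qed.
Lemma ev2D p q x y : ev2 (p + q) x y = ev2 p x y + ev2 q x y.
Proof. by rewrite !ev2E rmorphD. Qed.
Lemma ev2M p q x y : ev2 (p * q) x y = ev2 p x y * ev2 q x y.
Proof. by rewrite !ev2E rmorphM. Qed.
Lemma ev2N p x y : ev2 (- p) x y = - ev2 p x y.
Proof. by rewrite !ev2E rmorphN. Qed.
Lemma ev2B p q x y : ev2 (p - q) x y = ev2 p x y - ev2 q x y.
Proof. by rewrite !ev2E rmorphB. Qed.
Lemma ev2C c x y : ev2 c%:MP x y = ratr c.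
Proof. by rewrite !ev2E mmapC. Qed.
Lemma ev2Z c p x y : ev2 (c *: p) x y = ratr c * ev2 p x y.
Proof. by rewrite !ev2E mmapZ. Qed.
Lemma ev2n k x y : ev2 k%:R x y = k%:R.
Proof. by rewrite !ev2E rmorph_nat. Qed.
Lemma ev2X0 x y : ev2 'X_i0 x y = x.
Proof. by rewrite ev2E mmapX mmap1U. Qed.
Lemma ev2X1 x y : ev2 'X_i1 x y = y.
Proof. by rewrite ev2E mmapX mmap1U. Qed.
Lemma ev2Xm m x y : ev2 'X_[m] x y = x ^+ (m i0) * y ^+ (m i1).
Proof. rewrite ev2E mmapX /mmap1 !big_ord_recr big_ord0 /= mul1r.
have -> : widen_ord (leqnSn 1) ord_max = i0 by apply/val_inj.
by have -> : (ord_max : 'I_2) = i1 by apply/val_inj.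
Qed.
Lemma der_pow k (x : R) : is_derive (fun t : R => t ^+ k) x (k%:R * x ^+ k.-1).
Proof.
have := is_derive_pow (fun t => t) k x 1 (is_derive_id x).
move/(is_derive_ext _ _ _ _ (fun t => RpowE t k)).
by rewrite RpowE Rmult_1_r INRE.
Qed.

Lemma der_eq (f : R -> R) (x l l' : R) : is_derive f x l -> l = l' -> is_derive f x l'.
Proof. by move=> H <-. Qed.

Lemma mnmU0 (m : 'X_{1..2}) : (m - U_(i0))%MM i0 = (m i0).-1.
Proof. by rewrite mnmBE mnm1E eqxx subn1. Qed.
Lemma mnmU0' (m : 'X_{1..2}) : (m - U_(i0))%MM i1 = m i1.
Proof. by rewrite mnmBE mnm1E /= subn0. Qed.
Lemma mnmU1 (m : 'X_{1..2}) : (m - U_(i1))%MM i1 = (m i1).-1.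
Proof. by rewrite mnmBE mnm1E eqxx subn1. Qed.
Lemma mnmU1' (m : 'X_{1..2}) : (m - U_(i1))%MM i0 = m i0.
Proof. by rewrite mnmBE mnm1E /= subn0. Qed.

Lemma derX p x y : is_derive (fun t => ev2 p t y) x (ev2 (p^`M(i0)) x y).
Proof.
elim/mpolyind: p => [|c m p _ _ IH].
  rewrite mderiv0 ev2E mmap0.
  apply: (@is_derive_ext R_AbsRing R_NormedModule (fun _ => 0)); first by move=> t; rewrite ev2E mmap0.
  exact: is_derive_const.
rewrite mderivD mderivZ mderivX ev2D !ev2Z ev2Xm mnmU0 mnmU0' ratr_nat.
apply: (@is_derive_ext R_AbsRing R_NormedModule (fun t => (ratr c * y ^+ m i1) * t ^+ m i0 + ev2 p t y)).
  by move=> t; rewrite ev2D ev2Z ev2Xm; ring.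
apply: der_eq; first exact: (is_derive_plus _ _ _ _ _ (is_derive_scal _ _ _ _ (der_pow _ x)) IH).
rewrite /plus /= !(RplusE, RmultE); ring.
Qed.

Lemma derY p x y : is_derive (fun t => ev2 p x t) y (ev2 (p^`M(i1)) x y).
Proof.
elim/mpolyind: p => [|c m p _ _ IH].
  rewrite mderiv0 ev2E mmap0.
  apply: (@is_derive_ext R_AbsRing R_NormedModule (fun _ => 0)); first by move=> t; rewrite ev2E mmap0.
  exact: is_derive_const.
rewrite mderivD mderivZ mderivX ev2D !ev2Z ev2Xm mnmU1 mnmU1' ratr_nat.
apply: (@is_derive_ext R_AbsRing R_NormedModule (fun t => (ratr c * x ^+ m i0) * t ^+ m i1 + ev2 p x t)).
  by move=> t; rewrite ev2D ev2Z ev2Xm; ring.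
apply: der_eq; first exact: (is_derive_plus _ _ _ _ _ (is_derive_scal _ _ _ _ (der_pow _ y)) IH).
rewrite /plus /= !(RplusE, RmultE); ring.
Qed.
Definition gauss := (fun s : R => exp (- (s ^ 2))%R).
Lemma gaussE s : gauss s = exp (Ropp (pow s 2)).
Proof. by rewrite /gauss RpowE. Qed.

Lemma cont_gauss z : continuous gauss z.
Proof.
apply: ex_derive_continuous.
apply: (ex_derive_ext (fun s => exp (Ropp (pow s 2)))); first by move=> s; rewrite gaussE.
auto_derive; done.
Qed.

Lemma derErf t : is_derive Erf t (gauss t).
Proof.
apply: (is_derive_RInt gauss Erf 0%R t); last exact: cont_gauss.
apply: filter_forall => b; apply: RInt_correct; apply: ex_RInt_continuous => z _.
exact: cont_gauss.
Qed.

Lemma der_gauss t : is_derive gauss t (- (2 * t) * gauss t).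
Proof.
apply: (@is_derive_ext R_AbsRing R_NormedModule (fun s => exp (Ropp (pow s 2)))).
  by move=> s; rewrite gaussE.
apply: der_eq; first by auto_derive.
rewrite gaussE /=. rewrite !(RplusE, RmultE, RoppE, RpowE, R1E). ring.
Qed.

Lemma ev2u x y : ev2 uu x y = x - y.
Proof. by rewrite /uu ev2B ev2X0 ev2X1. Qed.

Lemma dY (a b : {mpoly rat[2]}) x y :
  is_derive (fun t => ev2 a x t * gauss (x - t) + ev2 b x t * Erf (x - t)) y
   (ev2 (a^`M(i1) + 2%:R * uu * a - b) x y * gauss (x - y) + ev2 (b^`M(i1)) x y * Erf (x - y)).
Proof.
have hm : is_derive (fun t : R => Rminus x t) y (Ropp 1).
  apply: der_eq; first by auto_derive. by rewrite !(RplusE, RmultE, RoppE, R1E, R0E); ring.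
have hg := is_derive_comp gauss (fun t => Rminus x t) y _ _ (der_gauss (x - y)) hm.
have he := is_derive_comp Erf (fun t => Rminus x t) y _ _ (derErf (x - y)) hm.
apply: der_eq.
  apply: is_derive_plus.
    apply: is_derive_mult; [exact: derY|exact: hg|by move=> *; apply: Rmult_comm].
  apply: is_derive_mult; [exact: derY|exact: he|by move=> *; apply: Rmult_comm].
rewrite /plus /mult /scal /= /mult /=.
rewrite !(ev2D, ev2B, ev2N, ev2M, ev2n, ev2u) !(RplusE, RmultE, RoppE, R1E).
ring.
Qed.

Lemma dX (a b : {mpoly rat[2]}) x y :
  is_derive (fun t => ev2 a t y * gauss (t - y) + ev2 b t y * Erf (t - y)) x
   (ev2 (a^`M(i0) - 2%:R * uu * a + b) x y * gauss (x - y) + ev2 (b^`M(i0)) x y * Erf (x - y)).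
Proof.
have hm : is_derive (fun t : R => Rminus t y) x (IZR 1).
  apply: der_eq; first by auto_derive. by rewrite !(RplusE, RmultE, RoppE, R1E, R0E); ring.
have hg := is_derive_comp gauss (fun t => Rminus t y) x _ _ (der_gauss (x - y)) hm.
have he := is_derive_comp Erf (fun t => Rminus t y) x _ _ (derErf (x - y)) hm.
apply: der_eq.
  apply: is_derive_plus.
    apply: is_derive_mult; [exact: derX|exact: hg|by move=> *; apply: Rmult_comm].
  apply: is_derive_mult; [exact: derX|exact: he|by move=> *; apply: Rmult_comm].
rewrite /plus /mult /scal /= /mult /=.
rewrite !(ev2D, ev2B, ev2N, ev2M, ev2n, ev2u) !(RplusE, RmultE, RoppE, R1E).
ring.
Qed.

Lemma ev20 x y : ev2 0 x y = 0.
Proof. by rewrite ev2E mmap0. Qed.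

Lemma gauss2 x y : exp (Ropp (pow (Rminus x y) 2)) = gauss (x - y).
Proof. by rewrite gaussE. Qed.

Lemma analytic (P Q T : {mpoly rat[2]}) (G : R -> R -> R) :
  (forall x y, G x y = Rmult (ev2 T x y) (exp (Ropp (pow (Rminus x y) 2)))) ->
  Q^`M(i1)^`M(i0) = 0 ->
  (let A := P^`M(i1) + 2%:R * uu * P - Q in A^`M(i0) - 2%:R * uu * A + Q^`M(i1) = T) ->
  mixed_partial_eq
      (fun x y => Rplus (Rmult (ev2 P x y) (exp (Ropp (pow (Rminus x y) 2))))
                        (Rmult (ev2 Q x y) (Erf (Rminus x y))))
      G.
Proof.
move=> HG HQ /= HT; split.
  move=> x y; eexists.
  apply: (@is_derive_ext R_AbsRing R_NormedModule); last exact: (dY P Q x y).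
  by move=> t /=; rewrite gauss2.
move=> x y.
apply: (@is_derive_ext R_AbsRing R_NormedModule
   (fun t => ev2 (P^`M(i1) + 2%:R * uu * P - Q) t y * gauss (t - y) + ev2 (Q^`M(i1)) t y * Erf (t - y))).
  move=> t; apply/esym/is_derive_unique.
  apply: (@is_derive_ext R_AbsRing R_NormedModule); last exact: (dY P Q t y).
  by move=> s /=; rewrite gauss2.
apply: der_eq; first exact: dX.
by rewrite HG HQ HT gauss2 ev20 mul0r addr0.
Qed.

Lemma alg_main n m : alg_goal n m.
Proof. by case: n => [|n]; [exact: alg0|exact: algS]. Qed.

Theorem lemma4 (n m : nat) :
  exists p q : {mpoly rat[2]},
    mixed_partial_eq
      (fun x y => Rplus (Rmult (ev2 p x y) (exp (Ropp (pow (Rminus x y) 2))))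
                        (Rmult (ev2 q x y) (Erf (Rminus x y))))
      (fun x y => Rmult (Rmult (Rmult (pow x n) (pow y m)) (Rminus x y))
                        (exp (Ropp (pow (Rminus x y) 2))))
    /\ has_total_degree p (Posz (n + m) - 1)%R
    /\ has_total_degree q (Posz (n + m))%R.
Proof.
have [P [Q [HQ [HT [HP HQs]]]]] := alg_main n m.
exists P, Q; split.
  apply: (analytic P Q (mo n m * uu)) => // x y.
  by rewrite ev2M ev2u /mo ev2M !ev2E !rmorphXn /= -!ev2E ev2X0 ev2X1 !RpowE.
rewrite /has_total_degree HP HQs; split.
  by rewrite subrK.
by rewrite -addn1.
Qed.
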